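(* Let $n\ge1$. For any $h\in\{1,\dots,n\}$ and $a\in\mathbb{Z}$, the set $T(h,a)$ of all tagged edges of $\mathcal{P}_{n,\infty}$ with starting point $(h,a)$, namely \[T(h,a)=\{E^{+1}_{(h,a),(h,a)},E^{-1}_{(h,a),(h,a)}\}\cup\{E_{(h,a),(k,b)}\mid (k,b)\text{ a boundary marked point with } (k,b)\notin\{(h,a),(h,a+1)\}\},\] is a triangulation of $\mathcal{P}_{n,\infty}$. Likewise, for any $h\in\{1,\dots,n\}$ and $a\in\mathbb{Z}\cup\{\infty\}$, the set of all tagged edges of $\mathcal{P}_{\overline{n,\infty}}$ with starting point $(h,a)$ is a triangulation of $\mathcal{P}_{\overline{n,\infty}}$.
   Context: $\mathcal{P}_{n,\infty}$: the closed unit disk $D$ with a puncture at the origin and boundary marked points $(h,a)$, $h\in\{1,\dots,n\}$, $a\in\mathbb{Z}$, arranged counterclockwise so that block $h$ is ordered by increasing $a$, the blocks appear in cyclic order $1,\dots,n$, and the marked points accumulate from both sides exactly at $n$ unmarked points $a_1,\dots,a_n$ ($a_h$ between block $h$ and block $h+1$, indices mod $n$). $\mathcal{P}_{\overline{n,\infty}}$ is the same but with each accumulation point $a_h$ also a marked point, labeled $(h,\infty)$, with the convention $\infty\pm k=\infty$. For a boundary marked point $P=(h,a)$ write $P^+=(h,a+1)$. Tagged edges: for boundary marked points $P\ne Q$ with $Q\ne P^+$, the edge $E_{P,Q}$ is the homotopy class (in $D$ minus the puncture, relative endpoints) of a simple path from $P$ to $Q$ through the interior minus the puncture, homotopic to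 the counterclockwise boundary path from $P$ to $Q$; for each boundary marked point $P$ there are two tagged edges $E^{\pm1}_{P,P}$, drawn as the segment from $P$ to the puncture, tagged when the sign is $-1$. The starting point of $E_{P,Q}$ and of $E^{\pm1}_{P,P}$ is $P$. Crossing number $\mathfrak c(E,F)$ of distinct tagged edges: if neither goes to the puncture, the minimal number of intersection points in the interior of the punctured disk among representatives; if exactly one is a puncture segment, the minimal number of interior intersection points of that segment with representatives of the other; if $E=E^{\epsilon}_{P,P}$, $F=E^{\lambda}_{Q,Q}$, then $\mathfrak c=1$ if $P\ne Q$ and $\epsilon\ne\lambda$, and $0$ otherwise. $E$ crosses $F$ if $\mathfrak c(E,F)\ne0$. A triangulation is a maximal set of pairwise non-crossing tagged edges. *)

(* Defs.v *)
From mathcomp Require Import all_boot all_order all_algebra.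
Set Implicit Arguments. Unset Strict Implicit. Unset Printing Implicit Defensive.
Import Order.TTheory GRing.Theory Num.Theory.

(* A boundary point (h,a): h is the block (1 <= h <= n), a is Some k for
   k : int, or None for the label oo. *)
Definition pt := (nat * option int)%type.

(* [bar] selects the surface: false = P_{n,oo}, true = P_{bar(n,oo)}. *)
Definition marked (bar : bool) (n : nat) (P : pt) : bool :=
  [&& 1 <= P.1, P.1 <= n & (bar || (P.2 != None))].

(* P^+ , with the convention oo + 1 = oo *)
Definition succ_pt (P : pt) : pt :=
  match P.2 with Some a => (P.1, Some (a + 1)%R) | None => P end.

(* order inside a block: increasing integers, oo (accumulation point a_h,
   lying between block h and block h+1) after all of them *)
Definition ltA (x y : option int) : bool :=
  match x, y with
  | Some a, Some b => (a < b)%R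
  | Some _, None => true
  | None, _ => false
  end.

(* linear order obtained by cutting the counterclockwise boundary circle just
   before block 1 (i.e. just after a_n) *)
Definition ltP (P Q : pt) : bool :=
  (P.1 < Q.1) || ((P.1 == Q.1) && ltA P.2 Q.2).
Definition leP (P Q : pt) : bool := ltP P Q || (P == Q).

(* cle R X Y : travelling counterclockwise from R, one meets X no later than Y *)
Definition cle (R X Y : pt) : bool :=
  if ltP X R == ltP Y R then leP X Y else ~~ ltP X R.

(* sub P Q R S : the closed counterclockwise boundary interval [P,Q] is
   contained in the closed counterclockwise boundary interval [R,S] *)
Definition sub (P Q R S : pt) : bool := cle R P Q && cle R Q S.

Definition in_open (Q R X : pt) : bool := [&& X != Q, X != R & cle Q X R].

(* tagged edges: Arc P Q = E_{P,Q};  Seg P true = E^{+1}_{P,P},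
   Seg P false = E^{-1}_{P,P} (tagged) *)
Inductive tedge := Arc of pt & pt | Seg of pt & bool.

Definition start (E : tedge) : pt :=
  match E with Arc P _ => P | Seg P _ => P end.

Definition is_tedge (bar : bool) (n : nat) (E : tedge) : Prop :=
  match E with
  | Arc P Q => marked bar n P /\ marked bar n Q /\ P <> Q /\ Q <> succ_pt P
  | Seg P _ => marked bar n P
  end.

Definition crosses (E F : tedge) : bool :=
  match E, F with
  | Arc P Q, Arc R S0 => ~~ [|| sub P Q R S0, sub R S0 P Q | sub R S0 Q P]
  | Seg P _, Arc Q R => in_open Q R P
  | Arc Q R, Seg P _ => in_open Q R P
  | Seg P e, Seg Q l => (P != Q) && (e != l)
  end.

Definition compatible (bar : bool) (n : nat) (T : tedge -> Prop) : Prop :=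
  (forall E, T E -> is_tedge bar n E) /\
  (forall E F, T E -> T F -> E <> F -> ~~ crosses E F).

Definition triangulation (bar : bool) (n : nat) (T : tedge -> Prop) : Prop :=
  compatible bar n T /\
  (forall T' : tedge -> Prop, (forall E, T E -> T' E) -> compatible bar n T' ->
     forall E, T' E -> T E).

Definition edges_from (bar : bool) (n : nat) (P : pt) : tedge -> Prop :=
  fun E => is_tedge bar n E /\ start E = P.

(* Main.v *)
Require Import Defs.
From mathcomp Require Import all_boot all_order all_algebra.
Import Order.TTheory GRing.Theory Num.Theory.
Import Defs.
Set Implicit Arguments. Unset Strict Implicit.

Lemma ltA_irr x : ltA x x = false.
Proof. by case: x => [a|] //=; rewrite ltxx. Qed.

Lemma ltA_trans x y z : ltA x y -> ltA y z -> ltA x z.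
Proof.
case: x => [a|]; case: y => [b|]; case: z => [c|] //=; exact: lt_trans.
Qed.

Lemma ltA_total x y : x != y -> ltA x y || ltA y x.
Proof.
case: x => [a|]; case: y => [b|] //= hab.
by apply: lt_total; apply: contra hab => /eqP ->.
Qed.

Lemma ltP_irr P : ltP P P = false.
Proof. by rewrite /ltP ltnn eqxx ltA_irr. Qed.

Lemma ltP_trans P Q R : ltP P Q -> ltP Q R -> ltP P R.
Proof.
case: P => p1 p2; case: Q => q1 q2; case: R => r1 r2; rewrite /ltP /=.
case/orP => [h1|/andP[/eqP e1 h1]]; case/orP => [h2|/andP[/eqP e2 h2]].
- by rewrite (ltn_trans h1 h2).
- by rewrite -e2 h1.
- by rewrite e1 h2.
- by rewrite e1 e2 eqxx (ltA_trans h1 h2) orbT.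
Qed.

Lemma ltP_total P Q : P != Q -> ltP P Q || ltP Q P.
Proof.
case: P => p1 p2; case: Q => q1 q2; rewrite /ltP /= => hne.
case: (ltngtP p1 q1) => //= e; subst.
rewrite ?eqxx /= ?ltnn /=; apply: ltA_total; apply: contra hne => /eqP ->; by [].
Qed.

Lemma asym P Q : P != Q -> ltP Q P = ~~ ltP P Q.
Proof.
move=> h; case: (boolP (ltP P Q)) => h1 /=.
  by apply/negP => h2; have := ltP_trans h1 h2; rewrite ltP_irr.
by have := ltP_total h; rewrite (negbTE h1).
Qed.

Lemma trb P Q R : ltP P Q ==> ltP Q R ==> ltP P R.
Proof. by apply/implyP => h1; apply/implyP => h2; exact: ltP_trans h1 h2. Qed.

Lemma succ_lt P a : P.2 = Some a -> ltP P (succ_pt P).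
Proof. case: P => p1 p2 /= ->; by rewrite /ltP /succ_pt /= eqxx ltrDl ltr01 orbT. Qed.

Lemma succ_nb P a Y : P.2 = Some a -> ltP P Y -> ltP Y (succ_pt P) -> False.
Proof.
case: P => p1 p2 /= ->; case: Y => y1 y2; rewrite /ltP /succ_pt /=.
case/orP => [h1|/andP[/eqP e1 h1]]; case/orP => [h2|/andP[/eqP e2 h2]].
- by move: (ltn_trans h1 h2); rewrite ltnn.
- by move: h1; rewrite e2 ltnn.
- by move: h2; rewrite e1 ltnn.
- case: y2 h1 h2 => [y|] //= h1 h2.
  by move: h2; rewrite ltzD1 leNgt h1.
Qed.

Ltac unf := rewrite /crosses /in_open /sub /cle /leP ?ltP_irr ?eqxx.

Ltac b3 A B C hAB hAC hBC :=
  move: (@trb A B C) (@trb A C B) (@trb B A C) (@trb B C A) (@trb C A B) (@trb C B A);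
  unf; rewrite ?(eq_sym B A) ?(eq_sym C A) ?(eq_sym C B)
    ?(negbTE hAB) ?(negbTE hAC) ?(negbTE hBC) ?(asym hAB) ?(asym hAC) ?(asym hBC);
  case: (ltP A B); case: (ltP A C); case: (ltP B C) => //=.

Ltac b4 A B C D hAB hAC hAD hBC hBD hCD :=
  move: (@trb A B C) (@trb A C B) (@trb B A C) (@trb B C A) (@trb C A B) (@trb C B A);
  move: (@trb A B D) (@trb A D B) (@trb B A D) (@trb B D A) (@trb D A B) (@trb D B A);
  move: (@trb A D C) (@trb A C D) (@trb D A C) (@trb D C A) (@trb C A D) (@trb C D A);
  move: (@trb D B C) (@trb D C B) (@trb B D C) (@trb B C D) (@trb C D B) (@trb C B D);
  unf; rewrite ?(eq_sym B A) ?(eq_sym C A) ?(eq_sym C B) ?(eq_sym D A) ?(eq_sym D B) ?(eq_sym D C)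
    ?(negbTE hAB) ?(negbTE hAC) ?(negbTE hBC) ?(negbTE hAD) ?(negbTE hBD) ?(negbTE hCD)
    ?(asym hAB) ?(asym hAC) ?(asym hBC) ?(asym hAD) ?(asym hBD) ?(asym hCD);
  case: (ltP A B); case: (ltP A C); case: (ltP B C);
  case: (ltP A D); case: (ltP B D); case: (ltP C D) => //=.

Lemma nsym (A B : pt) : A != B -> B != A.
Proof. by rewrite eq_sym. Qed.

Lemma cle_refl R X : cle R R X.
Proof.
case: (eqVneq R X) => [->|h]; first by unf.
unf; rewrite (negbTE h) (asym h); by case: (ltP R X).
Qed.

Lemma cle_total R X Y : cle R X Y || cle R Y X.
Proof.
rewrite /cle /leP; case: (eqVneq X Y) => [->|h]; first by rewrite eqxx !orbT.
rewrite (asym h).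
by case: (ltP X R); case: (ltP Y R); case: (ltP X Y).
Qed.

Lemma cross_lem P Q P0 X : P != Q -> P0 != P -> in_open P Q X -> ~~ in_open P Q P0 ->
  crosses (Arc P Q) (Arc P0 X).
Proof.
move=> hPQ hP0P hX hP0.
have hXP0 : X != P0 by apply: contraNneq hP0 => <-.
move: (hX); rewrite /in_open => /and3P[hXP hXQ _].
case: (eqVneq P0 Q) => [e|hP0Q].
  subst P0. move: hX hP0. b3 P Q X hPQ (nsym hXP) (nsym hXQ).
move: hX hP0. b4 P Q P0 X hPQ (nsym hP0P) (nsym hXP) (nsym hP0Q) (nsym hXQ) (nsym hXP0).
Qed.

Lemma nosucc P Q P0 X : P != Q -> P0 != P -> in_open P Q X -> ~~ in_open P Q P0 ->
  X = succ_pt P0 -> X != P0 -> False.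
Proof.
move=> hPQ hP0P hX hP0 eX hXP0.
have [a ha] : exists a, P0.2 = Some a.
  move: eX hXP0; rewrite /succ_pt; case: (P0.2) => [a|] ; first by exists a.
  by move=> ->; rewrite eqxx.
have l1 : ltP P0 X by rewrite eX; exact: succ_lt ha.
have n1 : ~~ (ltP P0 P && ltP P X).
  by apply/negP => /andP[h1 h2]; apply: (succ_nb ha h1); rewrite -eX.
have n2 : ~~ (ltP P0 Q && ltP Q X).
  by apply/negP => /andP[h1 h2]; apply: (succ_nb ha h1); rewrite -eX.
clear eX ha.
move: (hX); rewrite /in_open => /and3P[hXP hXQ _].
suff : false by [].
case: (eqVneq P0 Q) => [e|hP0Q].
  subst P0. move: hX hP0 l1 n1 n2. b3 P Q X hPQ (nsym hXP) (nsym hXQ).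
move: hX hP0 l1 n1 n2. b4 P Q P0 X hPQ (nsym hP0P) (nsym hXP) (nsym hP0Q) (nsym hXQ) (nsym hXP0).
Qed.

Lemma exists_lem bar n P Q : marked bar n P -> marked bar n Q -> P != Q -> Q != succ_pt P ->
  exists X, marked bar n X && in_open P Q X.
Proof.
case: P => p1 p2; case: p2 => [b|] mP mQ hPQ hQs.
  exists (succ_pt (p1, Some b)).
  have l1 : ltP (p1, Some b) (succ_pt (p1, Some b)) by exact: succ_lt.
  have n1 : ~~ (ltP (p1, Some b) Q && ltP Q (succ_pt (p1, Some b))).
    by apply/negP => /andP[h1 h2]; apply: (succ_nb (a:=b) _ h1 h2).
  apply/andP; split.
    by move: mP; rewrite /marked /succ_pt /=.
  move: l1 n1; set X := succ_pt _; set P := (p1, Some b) => l1 n1.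
  have hXP : X != P by apply: contraTneq l1 => ->; rewrite ltP_irr.
  have hXQ : X != Q by rewrite eq_sym.
  suff : in_open P Q X by [].
  move: l1 n1. b3 P Q X hPQ (nsym hXP) (nsym hXQ).
set c := match Q.2 with Some d => (d - 1)%R | None => 0%R end.
exists (Q.1, Some c).
have l1 : ltP (Q.1, Some c) Q.
  rewrite /ltP /= eqxx ltnn /= /c; case: (Q.2) => [d|] //=.
  by rewrite ltrBlDr ltrDl ltr01.
have l2 : ltP (p1, None) Q ==> ltP (p1, None) (Q.1, Some c).
  apply/implyP; by rewrite /ltP /=; case/orP => [->//|/andP[_ //]].
apply/andP; split.
  by move: mQ; rewrite /marked /= !orbT => /andP[-> /andP[-> _]].
move: l1 l2; set X := (Q.1, Some c); set P := (p1, None) => l1 l2.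
have hXP : X != P by rewrite /X /P; apply/eqP => -[].
have hXQ : X != Q by apply: contraTneq l1 => ->; rewrite ltP_irr.
suff : in_open P Q X by [].
move: l1 l2. b3 P Q X hPQ (nsym hXP) (nsym hXQ).
Qed.

Lemma main bar n P0 : marked bar n P0 -> triangulation bar n (edges_from bar n P0).
Proof.
move=> mP0.
have compT : compatible bar n (edges_from bar n P0).
  split; first by move=> E [].
  move=> E F [hE sE] [hF sF] hne.
  case: E hE sE hne => [P Q|P e] hE /= sE; case: F hF sF => [R S|R l] hF /= sF hne; subst P R.
  - rewrite /crosses negbK /sub !cle_refl /= orbA; apply/orP; left; exact: cle_total.
  - by rewrite /crosses /in_open eqxx.
  - by rewrite /crosses /in_open eqxx.
  - by rewrite /crosses eqxx.
split => // T' sT [hT' cT'] E hE.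
split; first exact: hT'.
case: (eqVneq (start E) P0) => // hs; exfalso.
case: E hE hs => [P Q|P e] hE /= hs.
- have [mP [mQ [hPQ hQs]]] := hT' _ hE.
  have hPQ' : P != Q by apply/eqP.
  have hQs' : Q != succ_pt P by apply/eqP.
  case: (boolP (in_open P Q P0)) => hin.
    have hF : T' (Seg P0 true) by apply: sT.
    by have := cT' _ _ hE hF (fun e => ltac:(discriminate)); rewrite /crosses hin.
  have [X /andP[mX hX]] := exists_lem mP mQ hPQ' hQs'.
  have hXP0 : X != P0 by apply: contraNneq hin => <-.
  have hF : T' (Arc P0 X).
    apply: sT; split => //=; split => //; split => //; split.
      by apply/eqP; rewrite eq_sym.
    by move=> eX; apply: (nosucc hPQ' (nsym hs) hX hin eX hXP0).
  have hne : Arc P Q <> Arc P0 X by move=> [eP _]; rewrite eP eqxx in hs.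
  by have := cT' _ _ hE hF hne; rewrite (cross_lem hPQ' (nsym hs) hX hin).
- have hF : T' (Seg P0 (~~ e)) by apply: sT.
  have hne : Seg P e <> Seg P0 (~~ e) by move=> [eP _]; rewrite eP eqxx in hs.
  by have := cT' _ _ hE hF hne; rewrite /crosses hs; case: e {hE hF hne}.
Qed.

Theorem lemma4p2 (n : nat) (hn : 1 <= n) :
  (forall (h : nat) (a : int), 1 <= h <= n ->
     triangulation false n (edges_from false n (h, Some a))) /\
  (forall (h : nat) (a : option int), 1 <= h <= n ->
     triangulation true n (edges_from true n (h, a))).
Proof.
split => h a /andP[h1 h2]; apply: main; by rewrite /marked /= h1 h2.
Qed.
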